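(* Let $\boldsymbol k$ be an algebraically closed field of characteristic $p>0$, and let $C$ be a finite cyclic group whose order is a positive power of $p$ (generated by a nonidentity unipotent element). For every finite-dimensional $\boldsymbol kC$-modules $P$ and $Q$, $$|P\otimes Q|\leqslant |P\otimes I^{\oplus\dim_{\boldsymbol k}Q}|,$$ where $I$ is the one-dimensional trivial $\boldsymbol kC$-module and $C$ acts on tensor products diagonally.
   Context: For a finite-dimensional $\boldsymbol kC$-module $N$, $|N|$ denotes the number of indecomposable summands in a decomposition of $N$ as a direct sum of indecomposable $\boldsymbol kC$-submodules (well defined by the Krull–Schmidt theorem). $I^{\oplus r}$ is the direct sum of $r$ copies of $I$. *)

(* Defs.v *)
From HB Require Import structures.
From mathcomp Require Import all_boot all_order all_algebra all_fingroup all_solvable.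
From mathcomp Require Import mxrepresentation.
From mathcomp Require Import mxtens.
Set Implicit Arguments. Unset Strict Implicit. Unset Printing Implicit Defensive.
Import GRing.Theory.
Local Open Scope ring_scope.

(* Finite-dimensional kG-modules are represented as matrix representations
   [mx_representation F G n] (row-vector convention of mxrepresentation.v). *)

Lemma tensmx11 (R : comPzRingType) (m n : nat) :
  (1%:M : 'M[R]_m) *t (1%:M : 'M[R]_n) = 1%:M.
Proof.
apply/matrixP=> i j.
case: (mxtens_indexP i)=> i0 i1; case: (mxtens_indexP j)=> j0 j1.
rewrite tensmxE !mxE /= (inj_eq (can_inj (@mxtens_indexK m n))) xpair_eqE.
by case: (i0 == j0); case: (i1 == j1); rewrite ?mulr1 ?mulr0 ?mul0r.
Qed.

Section Tens.
Variables (F : fieldType) (gT : finGroupType) (G : {group gT}).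

Lemma tens_mx_repr m n (rP : mx_representation F G m)
    (rQ : mx_representation F G n) :
  mx_repr G (fun x => rP x *t rQ x).
Proof.
split; first by rewrite !repr_mx1 tensmx11.
by move=> x y Gx Gy /=; rewrite tensmx_mul !repr_mxM.
Qed.

Definition tens_repr m n (rP : mx_representation F G m)
    (rQ : mx_representation F G n) : mx_representation F G (m * n) :=
  MxRepresentation (tens_mx_repr rP rQ).

Lemma triv_mx_repr n : mx_repr G (fun _ : gT => (1%:M : 'M[F]_n)).
Proof. by split=> // x y _ _; rewrite mulmx1. Qed.

Definition triv_repr n : mx_representation F G n :=
  MxRepresentation (triv_mx_repr n).

Definition mx_indecomposable n (rG : mx_representation F G n) (U : 'M[F]_n) :=
  [/\ mxmodule rG U, U != 0 &
      forall U1 U2 : 'M[F]_n, mxmodule rG U1 -> mxmodule rG U2 ->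
        (U1 + U2 :=: U)%MS -> mxdirect (U1 + U2) -> U1 = 0 \/ U2 = 0].

Definition indec_decomposition n (rG : mx_representation F G n) (r : nat) :=
  exists W : 'I_r -> 'M[F]_n,
    [/\ forall i, mx_indecomposable rG (W i),
        (\sum_i W i :=: 1%:M)%MS & mxdirect (\sum_i W i)].
End Tens.

(* Main.v *)
Require Import Defs.
From HB Require Import structures.
From mathcomp Require Import all_boot all_order all_algebra all_fingroup all_solvable.
From mathcomp Require Import pgroup cyclic mxrepresentation mxtens zify.
Set Implicit Arguments. Unset Strict Implicit. Unset Printing Implicit Defensive.
Import GRing.Theory.
Local Open Scope ring_scope.

Section LinAlg.
Variable F : fieldType.

Lemma submx_pow d a (W : 'M[F]_(a, d)) (N : 'M_d) k :
  (W *m N <= W)%MS -> (W *m N ^+ k <= W)%MS.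
Proof.
move=> WN; elim: k => [|k IH]; first by rewrite expr0 mulmx1.
by rewrite exprSr mulmxA (submx_trans (submxMr N IH)).
Qed.

Lemma nil_fix d a (W : 'M[F]_(a, d)) (N : 'M_d) k :
  W *m N ^+ k = 0 -> (W *m N <= W)%MS -> W != 0 ->
  (0 < \rank (W :&: kermx N))%N.
Proof.
elim: k a W => [|k IH] a W.
  by rewrite expr0 mulmx1 => -> _; rewrite eqxx.
move=> Wk WN W0.
have [WN0|WN0] := eqVneq (W *m N) 0.
  have -> : (W :&: kermx N :=: W)%MS.
    by apply/eqmxP; rewrite capmxSl sub_capmx submx_refl; apply/sub_kermxP.
  by rewrite lt0n mxrank_eq0.
have := IH _ (W *m N); rewrite -mulmxA -[N *m _]/(N * _) -exprS => /(_ Wk).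
rewrite (submxMr N WN) => /(_ isT WN0) H.
apply: leq_trans H _; apply: mxrankS; apply: capmxS => //.
Qed.

Lemma direct_sub d r (W V : 'I_r -> 'M[F]_d) :
  mxdirect (\sum_i W i) -> (forall i, V i <= W i)%MS ->
  \rank (\sum_i V i) = (\sum_i \rank (V i))%N.
Proof.
move=> /mxdirect_sumsP dW sVW.
have dV : mxdirect (\sum_i V i).
  apply/mxdirect_sumsP => i _; apply/eqP; rewrite -submx0.
  rewrite -[X in (_ <= X)%MS](dW i isT).
  apply: capmxS; first exact: sVW.
  by apply: sumsmxS => j _; exact: sVW.
by move/mxdirectP: dV.
Qed.

Lemma sum_fix d r (W : 'I_r -> 'M[F]_d) (N : 'M_d) :
  (\sum_i W i :=: 1%:M)%MS -> mxdirect (\sum_i W i) ->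
  (forall i, W i *m N <= W i)%MS ->
  (\sum_i \rank (W i :&: kermx N))%N = \rank (kermx N).
Proof.
move=> sW dW WN.
have e1 : (\sum_i \rank (W i))%N = d.
  by rewrite -(direct_sub dW (fun i => submx_refl _)) sW.1 mxrank1.
have e2 : (\sum_i \rank (W i *m N))%N = \rank N.
  rewrite -(direct_sub dW WN) -(sumsmxMr _ _ _).1.
  by rewrite (eqmxMr N sW).1 mul1mx.
have e3 : (\sum_i \rank (W i :&: kermx N) + \sum_i \rank (W i *m N))%N = d.
  rewrite -big_split /=; rewrite -[RHS]e1.
  by apply: eq_bigr => i _; rewrite addnC mxrank_mul_ker.
rewrite mxrank_ker; apply/eqP; rewrite -(eqn_add2r (\rank N)) subnK ?rank_leq_row //.
by rewrite -e2 e3.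
Qed.

Lemma mulM_entry d k m (X : 'M[F]_(m, d)) (N : 'M_d) (j0 : 'I_d) i (j : 'I_k) :
  (X *m \matrix_(a < d, j < k) (N ^+ j) a j0) i j = (X *m N ^+ j) i j0.
Proof. by rewrite !mxE; apply: eq_bigr => a _; rewrite mxE. Qed.

Lemma powW0 d a (W : 'M[F]_(a, d)) (N : 'M_d) k0 m (x : 'M_(m, a)) t :
  W *m N ^+ k0 = 0 -> (k0 <= t)%N -> x *m W *m N ^+ t = 0.
Proof.
move=> Wk le; rewrite -(subnKC le) exprD !mulmxA -(mulmxA x) Wk mulmx0.
by rewrite mul0mx.
Qed.

Lemma indec_fix d (W : 'M[F]_d) (N : 'M_d) k :
  N ^+ k = 0 -> (W *m N <= W)%MS ->
  (forall U1 U2 : 'M[F]_d, (U1 *m N <= U1)%MS -> (U2 *m N <= U2)%MS ->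
     (U1 + U2 :=: W)%MS -> mxdirect (U1 + U2) -> U1 = 0 \/ U2 = 0) ->
  (\rank (W :&: kermx N) <= 1)%N.
Proof.
move=> Nk WN indec; rewrite leqNgt; apply/negP => H2.
have W0 : W != 0.
  apply: contraTneq H2 => ->; rewrite (_ : ((0 : 'M_d) :&: _)%MS = 0) ?mxrank0 //.
  by apply/eqP; rewrite -submx0 capmxSl.
have exk : exists j, W *m N ^+ j == 0 by exists k; rewrite Nk mulmx0.
case: (ex_minnP exk) => k0 /eqP Wk0 kmin.
case: k0 Wk0 kmin => [|k1] Wk0 kmin.
  by move: Wk0; rewrite expr0 mulmx1 => W00; rewrite W00 eqxx in W0.
have Wk1 : W *m N ^+ k1 != 0.
  by apply/negP => /kmin; rewrite ltnn.
have [u /submxP [x ->] u0] := rowV0Pn Wk1.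
set v0 := x *m W.
have v0W : (v0 <= W)%MS by exact: submxMl.
have [j0 Hj0] : exists j0, (v0 *m N ^+ k1) 0 j0 != 0.
  apply/existsP; rewrite -negb_forall; apply: contra u0 => /forallP H.
  apply/eqP; rewrite mulmxA; apply/rowP => j; rewrite [RHS]mxE; apply/eqP; exact: H.
set k0 := k1.+1.
set M := \matrix_(a < d, j < k0) (N ^+ j) a j0.
set U1r := \matrix_(i < k0) (v0 *m N ^+ (k1 - i)).
have U1rW : (U1r <= W)%MS.
  apply/row_subP => i; rewrite rowK.
  exact: submx_trans (submxMr _ v0W) (submx_pow _ WN).
have Tentry : forall i j, (U1r *m M) i j = (v0 *m N ^+ (k1 - i + j)) 0 j0.
  move=> i j; rewrite mulM_entry.
  rewrite (_ : (U1r *m N ^+ j) i j0 = (row i (U1r *m N ^+ j)) 0 j0); last by rewrite [RHS]mxE.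
  by rewrite row_mul rowK -mulmxA -[_ *m N ^+ j]/(_ * _) -exprD.
have Tunit : U1r *m M \in unitmx.
  rewrite unitmxE unitfE det_trig.
    rewrite prodf_seq_neq0; apply/allP => i _; apply/implyP => _.
    by rewrite Tentry addnC subnKC // -ltnS.
  apply/forallP => i; apply/forallP => j; apply/implyP => lij.
  rewrite Tentry (powW0 x Wk0) ?mxE //.
  by have := ltn_ord i; lia.
have rT : \rank (U1r *m M) = k0 by rewrite mxrank_unit.
have rU1r : \rank U1r = k0.
  by apply/eqP; rewrite eqn_leq rank_leq_row -{1}rT mxrankM_maxl.
have capU1M : (U1r :&: kermx M)%MS = 0.
  apply/eqP; rewrite -mxrank_eq0; have := mxrank_mul_ker U1r M.
  by rewrite rT rU1r => H; apply/eqP; lia.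
set U1 := <<U1r>>%MS.
set U2 := (W :&: kermx M)%MS.
have U1N : (U1 *m N <= U1)%MS.
  rewrite (eqmxMr N (genmxE U1r)) genmxE.
  apply/row_subP => i; rewrite row_mul rowK -mulmxA -[_ *m N]/(_ * _) -exprSr.
  case: i => [[|i] Hi] /=.
    by rewrite subn0 (powW0 x Wk0) ?sub0mx.
  have Hi' : (i < k0)%N by apply: ltnW.
  rewrite -subSn; last by rewrite -ltnS.
  rewrite subSS (_ : v0 *m _ = row (Ordinal Hi') U1r) ?row_sub //.
  by rewrite rowK.
have U2W : (U2 <= W)%MS by exact: capmxSl.
have U2M : U2 *m M = 0 by apply/sub_kermxP; exact: capmxSr.
have U2N : (U2 *m N <= U2)%MS.
  rewrite sub_capmx (submx_trans (submxMr N U2W) WN) /=.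
  apply/sub_kermxP/matrixP => a j; rewrite mulM_entry [RHS]mxE -mulmxA -[N *m _]/(N * _) -exprS.
  case: (ltnP j.+1 k0) => hj.
    by move: (mulM_entry U2 N j0 a (Ordinal hj)) => /= <-; rewrite -/M U2M mxE.
  have /submxP [y ->] := U2W.
  by rewrite (powW0 y Wk0) ?mxE.
have dU : mxdirect (U1 + U2).
  apply/mxdirect_addsP; apply/eqP; rewrite -submx0 -capU1M.
  by apply: capmxS; rewrite ?genmxE ?capmxSr.
have sAW : (U1 + U2 <= W)%MS by rewrite addsmx_sub genmxE U1rW U2W.
have eU : (U1 + U2 :=: W)%MS.
  apply/eqmxP; rewrite -(geq_leqif (mxrank_leqif_eq sAW)).
  move/mxdirectP: dU => /= ->; rewrite mxrank_gen rU1r.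
  have := mxrank_mul_ker W M; have := rank_leq_col (W *m M).
  rewrite -/U2; lia.
have [U10|U20] := indec _ _ U1N U2N eU dU.
  by move: rU1r; rewrite -mxrank_gen -/U1 U10 mxrank0.
have eU1 : (U1 :=: W)%MS.
  rewrite U20 in eU; exact: (eqmx_trans (eqmx_sym (addsmx0 d U1)) eU).
move: H2; rewrite -(cap_eqmx eU1 (eqmx_refl _)).1 (cap_eqmx (genmxE U1r) (eqmx_refl _)).1.
set Z := (U1r :&: kermx N)%MS.
have rZ : \rank Z = \rank (Z *m M).
  have := mxrank_mul_ker Z M.
  have -> : (Z :&: kermx M)%MS = 0.
    apply/eqP; rewrite -submx0 -capU1M; apply: capmxS => //; exact: capmxSl.
  by rewrite mxrank0 addn0.
have ZN : Z *m N = 0 by apply/sub_kermxP; exact: capmxSr.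
have ZM : Z *m M = (Z *m M) *m delta_mx (0 : 'I_k0) 0.
  apply/matrixP => a j; rewrite [RHS]mxE (bigD1 0) //= big1 ?addr0; last first.
    by move=> b bn0; rewrite [delta_mx _ _ _ _]mxE (negbTE bn0) mulr0.
  rewrite [delta_mx _ _ _ _]mxE eqxx /=.
  case: (eqVneq j 0) => [->|jn0]; first by rewrite mulr1.
  rewrite mulr0 mulM_entry.
  case: j jn0 => [[|j] Hj] //= _.
  by rewrite exprS mulmxA ZN mul0mx mxE.
rewrite rZ ZM; apply/negP; rewrite -leqNgt.
by apply: leq_trans (mxrankM_maxr _ _) _; rewrite mxrank_delta.
Qed.

Lemma castmxB m n m' n' (e : (m = m') * (n = n')) (A B : 'M[F]_(m, n)) :
  castmx e A - castmx e B = castmx e (A - B).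
Proof. by apply/matrixP => i j; rewrite !(castmxE, mxE). Qed.

Lemma rank_cast m n m' n' (e : (m = m') * (n = n')) (A : 'M[F]_(m, n)) :
  \rank (castmx e A) = \rank A.
Proof. by case: e => e1 e2; subst; rewrite castmx_id. Qed.

Lemma rank_blockL m1 m2 n1 n2 (A : 'M[F]_(m1, n1)) (Cm : 'M_(m2, n1))
  (D : 'M_(m2, n2)) :
  (\rank A + \rank D <= \rank (block_mx A 0 Cm D))%N.
Proof.
set M := block_mx A 0 Cm D.
pose P : 'M[F]_(n1 + n2, n2) := col_mx 0 1%:M.
have MP : M *m P = col_mx 0 D.
  by rewrite /M /P mul_block_col !mulmx0 !mulmx1 addr0 add0r.
have sA : (row_mx A 0 <= M :&: kermx P)%MS.
  rewrite sub_capmx; apply/andP; split.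
    by rewrite /M block_mxEv; apply/submxP; exists (row_mx 1%:M 0); rewrite mul_row_col mul1mx mul0mx addr0.
  by apply/sub_kermxP; rewrite /P mul_row_col mulmx0 mul0mx addr0.
have := mxrank_mul_ker M P; rewrite MP rank_col_0mx => <-.
by rewrite addnC leq_add2l (leq_trans _ (mxrankS sA)) // rank_row_mx0.
Qed.

Lemma tens_step m n' (Y : 'M[F]_m) (y : 'cV_n') (X : 'M_n') :
  (block_mx (1%:M : 'M_1) 0 y X) *t Y - 1%:M =
  castmx (esym (mulnDl 1 n' m), esym (mulnDl 1 n' m))
    (block_mx (castmx (esym (mul1n m), esym (mul1n m)) (Y - 1%:M)) 0
              (y *t Y) (X *t Y - 1%:M)).
Proof.
rewrite -{1}(tensmx11 F (1 + n') m) (scalar_mx_block 1 n' (1 : F)).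
rewrite !tens_block_mx castmxB !tens0mx.
congr castmx.
rewrite opp_block_mx add_block_mx !subr0 tensmx11; congr block_mx.
apply/matrixP => i j; case: (mxtens_indexP i) => i0 i1; case: (mxtens_indexP j) => j0 j1.
rewrite castmxE !mxE !mxtens_indexK /= [i0]ord1 [j0]ord1.
have ci : forall k : 'I_m, cast_ord (esym (esym (mul1n m))) (mxtens_index (0, k)) = k.
  by move=> k; apply: val_inj => /=; rewrite mul0n add0n.
rewrite !ci eqxx mul1r (inj_eq (can_inj (@mxtens_indexK _ _))) xpair_eqE eqxx //.
by rewrite tensmx11.
Qed.
Lemma step_ge m n' (Y : 'M[F]_m) (y : 'cV_n') (X : 'M_n') :
  (\rank (Y - 1%:M)%R + \rank (X *t Y - 1%:M)%R <=
   \rank ((block_mx (1%:M : 'M_1) 0 y X) *t Y - 1%:M)%R)%N.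
Proof.
rewrite tens_step rank_cast; apply: leq_trans (rank_blockL _ _ _).
by rewrite rank_cast.
Qed.

Lemma one_tens n m (Y : 'M[F]_m) :
  \rank ((1%:M : 'M_n) *t Y - 1%:M) = (n * \rank (Y - 1%:M)%R)%N.
Proof.
elim: n => [|n IH].
  by apply/eqP; rewrite -leqn0; exact: rank_leq_row.
have -> : (1%:M : 'M_(1 + n)) = block_mx (1%:M : 'M_1) 0 0 1%:M
  := scalar_mx_block _ _ _.
rewrite tens_step rank_cast tens0mx rank_diag_block_mx rank_cast IH.
by rewrite mulSn.
Qed.

Lemma block_pow n' (c : 'cV[F]_n') (D : 'M_n') j :
  exists a c', (block_mx (0 : 'M_1) 0 c D) ^+ j = block_mx a 0 c' (D ^+ j).
Proof.
elim: j => [|j [a [c' IH]]].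
  by exists 1%:M, 0; rewrite !expr0; exact: scalar_mx_block.
exists (a *m 0 + 0 *m c), (c' *m 0 + D ^+ j *m c).
rewrite exprSr IH -[_ * _]/(_ *m _) mulmx_block !mulmx0 !mul0mx addr0.
by rewrite !add0r exprSr.
Qed.

Lemma conj_pow n (S A : 'M[F]_n) j : S \in unitmx ->
  (S *m A *m invmx S) ^+ j = S *m A ^+ j *m invmx S.
Proof.
move=> uS; elim: j => [|j IH]; first by rewrite !expr0 mulmx1 mulmxV.
rewrite exprS IH -[_ * _]/(_ *m _) !mulmxA mulmxKV //.
by rewrite exprS -[A * _]/(A *m _) !mulmxA.
Qed.


Lemma unip_tens n m (X : 'M[F]_n) (Y : 'M_m) k :
  (X - 1%:M) ^+ k = 0 ->
  (n * \rank (Y - 1%:M)%R <= \rank (X *t Y - 1%:M)%R)%N.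
Proof.
elim: n X k => [|n IH] X k Xk; first by rewrite mul0n.
set N := X - 1%:M.
have K0 : kermx N != 0.
  have H := nil_fix (W := 1%:M : 'M_(n.+1)) (N := N) (k := k).
  rewrite Xk mulmx0 submx1 -mxrank_eq0 mxrank1 in H.
  rewrite -mxrank_eq0 -lt0n; exact: leq_trans (H erefl isT isT) (mxrankS (capmxSr _ _)).
set u := nz_row (kermx N).
have u0 : u != 0 by rewrite nz_row_eq0.
have uN : u *m N = 0 by apply/sub_kermxP; exact: nz_row_sub.
have uX : u *m X = u by move/eqP: uN; rewrite mulmxBr mulmx1 subr_eq0 => /eqP.
have eZ : \rank (u^C)%MS = n by rewrite mxrank_compl rank_rV u0 subn1.
set Z : 'M_(n, 1 + n) := castmx (eZ, erefl) (row_base (u^C)%MS).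
set S : 'M_(1 + n) := col_mx u Z.
have eS : (S :=: u + u^C)%MS.
  apply: eqmx_trans (eqmx_sym (addsmxE u Z)) _.
  apply: adds_eqmx => //; exact: eqmx_trans (eqmx_cast _ _) (eq_row_base _).
have uS : S \in unitmx.
  rewrite -row_full_unit; have := addsmx_compl_full u.
  by rewrite /row_full eS.1.
set L := S *m X *m invmx S.
have uL : usubmx L = row_mx 1%:M 0.
  rewrite /L -!mul_usub_mx /S col_mxKu uX.
  rewrite -[u in u *m _](col_mxKu u Z) mul_usub_mx -/S mulmxV //.
  by rewrite [1%:M](scalar_mx_block 1 n (1 : F)) block_mxEv col_mxKu.
have L' : L = block_mx 1%:M 0 (dlsubmx L) (drsubmx L).
  by rewrite -{1}(submxK L) /ulsubmx /ursubmx uL row_mxKl row_mxKr.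
set y := dlsubmx L; set X' := drsubmx L.
have X'k : (X' - 1%:M) ^+ k = 0.
  have e1 : L - 1%:M = S *m N *m invmx S.
    by rewrite /L /N mulmxBr mulmxBl mulmx1 mulmxV.
  have e2 : L - 1%:M = block_mx (0 : 'M_1) 0 y (X' - 1%:M).
    rewrite {1}L' [X in _ - X](scalar_mx_block 1 n (1 : F)).
    by rewrite opp_block_mx add_block_mx subrr !subr0.
  have [a [c' hp]] := block_pow y (X' - 1%:M) k.
  have : (L - 1%:M) ^+ k = 0 by rewrite e1 conj_pow // Xk mulmx0 mul0mx.
  rewrite e2 hp => /(congr1 drsubmx); rewrite block_mxKdr => ->.
  by apply/matrixP => i j; rewrite !mxE.
have h1 := IH X' k X'k.
have h2 := step_ge Y y X'.
have h3 : (\rank (L *t Y - 1%:M)%R <= \rank (X *t Y - 1%:M)%R)%N.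
  have -> : L *t Y - 1%:M = (S *t 1%:M) *m (X *t Y - 1%:M) *m (invmx S *t 1%:M).
    rewrite mulmxBr mulmxBl mulmx1 !tensmx_mul mulmx1 mul1mx mulmxV //.
    by rewrite mulmx1 tensmx11.
  exact: leq_trans (mxrankM_maxl _ _) (mxrankM_maxr _ _).
rewrite L' -/y -/X' in h3.
rewrite mulSn; exact: leq_trans (leq_add (leqnn _) h1) (leq_trans h2 h3).
Qed.


Definition sw m n (a : 'I_(m * n)) : 'I_(n * m) :=
  mxtens_index ((mxtens_unindex a).2, (mxtens_unindex a).1).

Lemma swK m n : cancel (@sw m n) (@sw n m).
Proof. by move=> a; rewrite /sw mxtens_indexK -[RHS]mxtens_unindexK; case: (mxtens_unindex a). Qed.

Definition swmx m n : 'M[F]_(m * n, n * m) := \matrix_(a, b) (sw a == b)%:R.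

Lemma swmx_l m n p (M : 'M[F]_(n * m, p)) a b :
  (swmx m n *m M) a b = M (sw a) b.
Proof.
rewrite mxE (bigD1 (sw a)) //= big1 ?addr0; first by rewrite mxE eqxx mul1r.
by move=> c /negbTE hc; rewrite mxE eq_sym hc mul0r.
Qed.

Lemma swmx_r m n p (M : 'M[F]_(p, m * n)) a b :
  (M *m swmx m n) a b = M a (sw b).
Proof.
rewrite mxE (bigD1 (sw b)) //= big1 ?addr0; first by rewrite mxE swK eqxx mulr1.
move=> c hc; rewrite mxE.
rewrite (_ : (sw c == b) = false) ?mulr0 //; apply/negbTE; apply: contra hc => /eqP <-.
by rewrite swK.
Qed.

Lemma swap_le m n (A : 'M[F]_m) (B : 'M[F]_n) :
  (\rank (A *t B - 1%:M)%R <= \rank (B *t A - 1%:M)%R)%N.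
Proof.
have e1 : swmx m n *m swmx n m = 1%:M.
  by apply/matrixP => a b; rewrite swmx_l !mxE swK.
have e2 : swmx m n *m (B *t A) = (A *t B) *m swmx m n.
  apply/matrixP => a b; rewrite swmx_l swmx_r.
  case: (mxtens_indexP a) => i0 i1; case: (mxtens_indexP b) => j0 j1.
  by rewrite /sw !mxtens_indexK /= !tensmxE mulrC.
have -> : A *t B - 1%:M = swmx m n *m (B *t A - 1%:M) *m swmx n m.
  by rewrite mulmxBr mulmxBl mulmx1 e1 e2 -mulmxA e1 mulmx1.
exact: leq_trans (mxrankM_maxl _ _) (mxrankM_maxr _ _).
Qed.

End LinAlg.

Lemma unip_nil (F : fieldType) p d (X : 'M[F]_d) e :
  p \in [pchar F] -> X ^+ (p ^ e) = 1 -> (X - 1) ^+ (p ^ e) = 0.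
Proof.
case: d X => [|d] X pF Xe; first by rewrite flatmx0.
have pM : p \in [pchar 'M[F]_d.+1] by rewrite (pchar_lalg ('M[F]_d.+1))...
suff -> : (X - 1) ^+ (p ^ e) = X ^+ (p ^ e) - 1 by rewrite Xe subrr.
elim: e {Xe} => [|e IH]; first by rewrite !expr1.
rewrite expnSr !exprM IH.
have := pFrobenius_autB_comm pM (commr1 (X ^+ (p ^ e))).
by rewrite !pFrobenius_autE expr1n.
Qed.



Section Grp.
Variables (F : fieldType) (gT : finGroupType) (C : {group gT}) (g : gT).
Hypothesis defC : (C : {set gT}) = <[g]>%g.

Lemma gC : g \in C. Proof. by rewrite defC cycle_id. Qed.

Lemma mod_gen d (rG : mx_representation F C d) (U : 'M_d) :
  mxmodule rG U <-> (U *m (rG g - 1) <= U)%MS.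
Proof.
have e : U *m (rG g - 1) = U *m rG g - U by rewrite mulmxBr mulmx1.
rewrite e; split.
  move/mxmoduleP => H; rewrite addmx_sub ?eqmx_opp //; exact: H gC.
move=> H; have H1 : (U *m rG g <= U)%MS.
  by rewrite -[U *m rG g](subrK U) addmx_sub.
apply/mxmoduleP => x Cx.
have /cycleP [i ->] : x \in <[g]>%g by move: Cx; rewrite defC.
elim: i => [|i IH]; first by rewrite expg0 repr_mx1 mulmx1.
rewrite expgS repr_mxM ?groupX ?gC // mulmxA.
exact: submx_trans (submxMr _ H1) IH.
Qed.
Variable p : nat.
Hypothesis pF : p \in [pchar F].
Hypothesis pC : (p.-group C)%g.

Lemma repr_pow d (rG : mx_representation F C d) i : rG (g ^+ i)%g = rG g ^+ i.
Proof.
elim: i => [|i IH]; first by rewrite expg0 repr_mx1.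
by rewrite expgS repr_mxM ?groupX ?gC // IH exprS.
Qed.

Lemma nil_gen d (rG : mx_representation F C d) : exists k, (rG g - 1) ^+ k = 0.
Proof.
have [e he] := p_natP pC.
exists (p ^ e)%N; apply: unip_nil pF _.
rewrite -he -repr_pow (_ : #|C| = #[g]%g) ?expg_order ?repr_mx1 //.
by rewrite defC.
Qed.

Lemma count_le d (rG : mx_representation F C d) r :
  indec_decomposition rG r -> (r <= \rank (kermx (rG g - 1)))%N.
Proof.
case=> W [Hind sW dW]; have [k Nk] := nil_gen rG.
have WN i : (W i *m (rG g - 1) <= W i)%MS by apply/mod_gen; case: (Hind i).
rewrite -(sum_fix sW dW WN) -{1}[r]card_ord -sum1_card.
apply: leq_sum => i _; apply: (nil_fix (k := k)); rewrite ?Nk ?mulmx0 //.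
by case: (Hind i).
Qed.

Lemma count_ge d (rG : mx_representation F C d) r :
  indec_decomposition rG r -> (\rank (kermx (rG g - 1)) <= r)%N.
Proof.
case=> W [Hind sW dW]; have [k Nk] := nil_gen rG.
have WN i : (W i *m (rG g - 1) <= W i)%MS by apply/mod_gen; case: (Hind i).
rewrite -(sum_fix sW dW WN).
apply: (@leq_trans (\sum_(i < r) 1)%N); last by rewrite sum1_card card_ord.
apply: leq_sum => i _; apply: (indec_fix Nk (WN i)).
case: (Hind i) => _ _ H U1 U2 h1 h2; apply: H; exact/mod_gen.
Qed.
End Grp.


Theorem lemma3 (F : closedFieldType) (p : nat) (gT : finGroupType)
    (C : {group gT}) (charFp : p \in [pchar F]) (cycC : cyclic C)
    (pC : (p.-group C)%g) (ntC : C :!=: 1%g)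
    (m n : nat) (rP : mx_representation F C m) (rQ : mx_representation F C n)
    (r s : nat) :
  indec_decomposition (tens_repr rP rQ) r ->
  indec_decomposition (tens_repr rP (@triv_repr F gT C n)) s ->
  (r <= s)%N.
Proof.
move=> H1 H2.
have [g defC] := cyclicP cycC.
have le1 := count_le defC charFp pC H1.
have ge2 := count_ge defC charFp pC H2.
apply: leq_trans le1 (leq_trans _ ge2) => /=.
rewrite !mxrank_ker leq_sub2l //.
have [k Qk] := nil_gen defC charFp pC rQ.
apply: leq_trans (swap_le _ _) _.
rewrite one_tens.
apply: leq_trans (unip_tens _ Qk) _.
exact: swap_le.
Qed.
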